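(* A forest algebra $\mathcal F$ (finite or infinite) is 2-distributive if and only if it divides a wreath product $\mathcal G_1\wr\mathcal G_2$ of two (possibly infinite) distributive forest algebras $\mathcal G_1,\mathcal G_2$.
   Context: A forest algebra is a pair $(H,V)$ where $H$ is a monoid written additively, $V$ is a monoid written multiplicatively, and $V$ acts faithfully on $H$. For each $h$ there is $I_h\in V$ with $I_h h'=h+h'$, and each $h$ is of the form $v\cdot 0_H$. All forest algebras are horizontally commutative and idempotent. Morphisms preserve the monoid operations, the action and $h\mapsto I_h$. A subalgebra is a pair of subsets closed under all forest algebra operations. A congruence is a pair of equivalence relations on $H$ and $V$ compatible with all operations, and the quotient is formed from the equivalence classes. $(H,V)$ divides $(H',V')$, written $(H,V)\prec(H',V')$, if $(H,V)$ is a quotient of a subalgebra of $(H',V')$. The free forest algebra $\Sigma^\Delta=(H_\Sigma,V_\Sigma)$ has as forest part the finite sets of unordered trees $\alpha[C]$ (with $\alpha\in\Sigma$ and $C$ a finite set of trees), under union. Its contexts are forests with one leaf replaced by a hole. $\pi(f)$ is the prefix-closed set of root-starting label paths of a forest $f$. $(H,V)$ is distributive if $v(h_1+h_2)=vh_1+vh_2$ for all $v,h_1,h_2$. It is 2-distributive if for every finite alphabet $\Sigma$, every morphism $\phi:\Sigma^\Delta\to(H,V)$, every context $v$, and all forests $f_1,f_2$ with $\pi(f_1)=\pi(f_2)$, we have $\phi(v(f_1+f_2))=\phi(vf_1+vf_2)$. Wreath product: $(H_1,V_1)\wr(H_2,V_2)=(H_1\times H_2,\ V_1^{H_2}\times V_2)$.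 The action is $(f,v)(h_1,h_2)=(f(h_2)h_1,\ vh_2)$. Multiplication is $(f,v)(f',v')=(f'',vv')$ with $f''(h)=f(v'h)\cdot f'(h)$. *)

(* Defs.v *)
From mathcomp Require Import all_boot.
From Stdlib Require List.
From Stdlib Require Import FunctionalExtensionality.

Set Implicit Arguments.
Unset Strict Implicit.
Unset Printing Implicit Defensive.

Record forest_algebra := ForestAlgebra {
  fH : Type;
  fV : Type;
  hadd : fH -> fH -> fH;
  hzero : fH;
  vmul : fV -> fV -> fV;
  vone : fV;
  act : fV -> fH -> fH;
  ins : fH -> fV;
  haddA : forall x y z, hadd x (hadd y z) = hadd (hadd x y) z;
  hadd0l : forall x, hadd hzero x = x;
  hadd0r : forall x, hadd x hzero = x;
  haddC : forall x y, hadd x y = hadd y x;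
  haddI : forall x, hadd x x = x;
  vmulA : forall u v w, vmul u (vmul v w) = vmul (vmul u v) w;
  vmul1l : forall v, vmul vone v = v;
  vmul1r : forall v, vmul v vone = v;
  actM : forall v w h, act (vmul v w) h = act v (act w h);
  act1 : forall h, act vone h = h;
  act_faithful : forall v w, (forall h, act v h = act w h) -> v = w;
  insE : forall h h', act (ins h) h' = hadd h h';
  act_zero_onto : forall h, exists v, act v hzero = h
}.

Definition distributive (F : forest_algebra) : Prop :=
  forall (v : fV F) (h1 h2 : fH F),
    act v (hadd h1 h2) = hadd (act v h1) (act v h2).

Definition subalgebra (G : forest_algebra) (H0 : fH G -> Prop) (V0 : fV G -> Prop)
  : Prop :=
  ((H0 (hzero G)) /\ ((forall x y, H0 x -> H0 y -> H0 (hadd x y))) /\ (V0 (vone G)) /\ ((forall v w, V0 v -> V0 w -> V0 (vmul v w))) /\ ((forall v h, V0 v -> H0 h -> H0 (act v h))) /\ ((forall h, H0 h -> V0 (ins h)))).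

Definition congruence (G : forest_algebra) (H0 : fH G -> Prop) (V0 : fV G -> Prop)
  (eH : fH G -> fH G -> Prop) (eV : fV G -> fV G -> Prop) : Prop :=
  ((
      (forall x, H0 x -> eH x x)) /\ ((forall x y, H0 x -> H0 y -> eH x y -> eH y x)) /\ ((forall x y z, H0 x -> H0 y -> H0 z -> eH x y -> eH y z -> eH x z)) /\ (
      (forall v, V0 v -> eV v v)) /\ ((forall v w, V0 v -> V0 w -> eV v w -> eV w v)) /\ ((forall u v w, V0 u -> V0 v -> V0 w -> eV u v -> eV v w -> eV u w)) /\ (
      (forall x x' y y', H0 x -> H0 x' -> H0 y -> H0 y' ->
          eH x x' -> eH y y' -> eH (hadd x y) (hadd x' y'))) /\ ((forall v v' w w', V0 v -> V0 v' -> V0 w -> V0 w' ->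
          eV v v' -> eV w w' -> eV (vmul v w) (vmul v' w'))) /\ ((forall v v' h h', V0 v -> V0 v' -> H0 h -> H0 h' ->
          eV v v' -> eH h h' -> eH (act v h) (act v' h'))) /\ ((forall h h', H0 h -> H0 h' -> eH h h' -> eV (ins h) (ins h')))).

(* [@quotient_iso F G H0 V0 eH eV rH rV]: F is isomorphic to the quotient of   *)
(* (H0,V0) by (eH,eV), via h |-> class of rH h and v |-> class of rV v.     *)
Definition quotient_iso (F G : forest_algebra)
  (H0 : fH G -> Prop) (V0 : fV G -> Prop)
  (eH : fH G -> fH G -> Prop) (eV : fV G -> fV G -> Prop)
  (rH : fH F -> fH G) (rV : fV F -> fV G) : Prop :=
  ((
      (forall h, H0 (rH h)) /\ (forall v, V0 (rV v))) /\ (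
      (forall h h', eH (rH h) (rH h') -> h = h') /\
      (forall v v', eV (rV v) (rV v') -> v = v')) /\ ((forall x, H0 x -> exists h, eH x (rH h)) /\
      (forall x, V0 x -> exists v, eV x (rV v))) /\ (
      (forall h h', eH (rH (hadd h h')) (hadd (rH h) (rH h'))) /\
      eH (rH (hzero F)) (hzero G)) /\ ((forall v w, eV (rV (vmul v w)) (vmul (rV v) (rV w))) /\
      eV (rV (vone F)) (vone G)) /\ ((forall v h, eH (rH (act v h)) (act (rV v) (rH h))) /\
      (forall h, eV (rV (ins h)) (ins (rH h))))).

Definition divides (F G : forest_algebra) : Prop :=
  exists (H0 : fH G -> Prop) (V0 : fV G -> Prop)
         (eH : fH G -> fH G -> Prop) (eV : fV G -> fV G -> Prop)
         (rH : fH F -> fH G) (rV : fV F -> fV G),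
    ((subalgebra H0 V0) /\ (congruence H0 V0 eH eV) /\ (@quotient_iso F G H0 V0 eH eV rH rV)).

Section Wreath.
Variables G1 G2 : forest_algebra.

Definition wH : Type := (fH G1 * fH G2)%type.
Definition wV : Type := ((fH G2 -> fV G1) * fV G2)%type.

Definition wadd (x y : wH) : wH := (hadd (fst x) (fst y), hadd (snd x) (snd y)).
Definition wzero : wH := (hzero G1, hzero G2).
Definition wmul (x y : wV) : wV :=
  (fun h => vmul (fst x (act (snd y) h)) (fst y h), vmul (snd x) (snd y)).
Definition wone : wV := (fun _ => vone G1, vone G2).
Definition wact (x : wV) (h : wH) : wH :=
  (act (fst x (snd h)) (fst h), act (snd x) (snd h)).
Definition wins (h : wH) : wV := (fun _ => ins (fst h), ins (snd h)).

Lemma waddA x y z : wadd x (wadd y z) = wadd (wadd x y) z.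
Proof. by rewrite /wadd /= !haddA. Qed.
Lemma wadd0l x : wadd wzero x = x.
Proof. by case: x => a b; rewrite /wadd /= !hadd0l. Qed.
Lemma wadd0r x : wadd x wzero = x.
Proof. by case: x => a b; rewrite /wadd /= !hadd0r. Qed.
Lemma waddC x y : wadd x y = wadd y x.
Proof. by rewrite /wadd haddC [hadd (snd x) _]haddC. Qed.
Lemma waddI x : wadd x x = x.
Proof. by case: x => a b; rewrite /wadd /= !haddI. Qed.
Lemma wmulA u v w : wmul u (wmul v w) = wmul (wmul u v) w.
Proof.
rewrite /wmul /= vmulA; congr pair.
by apply: functional_extensionality => h; rewrite vmulA actM.
Qed.
Lemma wmul1l v : wmul wone v = v.
Proof.
case: v => f v; rewrite /wmul /= vmul1l; congr pair.
by apply: functional_extensionality => h; rewrite vmul1l.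
Qed.
Lemma wmul1r v : wmul v wone = v.
Proof.
case: v => f v; rewrite /wmul /= vmul1r; congr pair.
by apply: functional_extensionality => h; rewrite vmul1r act1.
Qed.
Lemma wactM v w h : wact (wmul v w) h = wact v (wact w h).
Proof. by rewrite /wact /wmul /= !actM. Qed.
Lemma wact1 h : wact wone h = h.
Proof. by case: h => a b; rewrite /wact /= !act1. Qed.
Lemma wact_faithful v w : (forall h, wact v h = wact w h) -> v = w.
Proof.
case: v => f v; case: w => g w /= E.
have Ev : v = w.
  by apply: act_faithful => h2; have := E (hzero G1, h2); case.
rewrite Ev; congr pair.
apply: functional_extensionality => h2; apply: act_faithful => h1.
by have := E (h1, h2); case.
Qed.
Lemma winsE h h' : wact (wins h) h' = wadd h h'.
Proof. by rewrite /wact /wadd /= !insE. Qed.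
Lemma wact_zero_onto h : exists v, wact v wzero = h.
Proof.
by exists (wins h); rewrite winsE wadd0r.
Qed.

Definition wreath : forest_algebra :=
  @ForestAlgebra wH wV wadd wzero wmul wone wact wins
    waddA wadd0l wadd0r waddC waddI wmulA wmul1l wmul1r
    wactM wact1 wact_faithful winsE wact_zero_onto.

End Wreath.

(* The free forest algebra Sigma^Delta, presented by raw syntax modulo the   *)
(* set-semantics equality of unordered trees / finite sets of trees.         *)

Inductive tree (A : Type) : Type := Node : A -> list (tree A) -> tree A.
Arguments Node {A} a cs.
Definition forest (A : Type) : Type := list (tree A).

Inductive teq {A : Type} : tree A -> tree A -> Prop :=
| teq_Node (a : A) (cs ds : forest A) :
    (forall c, List.In c cs -> exists2 d, List.In d ds & teq c d) ->
    (forall d, List.In d ds -> exists2 c, List.In c cs & teq c d) ->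
    teq (Node a cs) (Node a ds).

Definition feq {A : Type} (f g : forest A) : Prop :=
  (forall c, List.In c f -> exists2 d, List.In d g & teq c d) /\
  (forall d, List.In d g -> exists2 c, List.In c f & teq c d).

Fixpoint tmap {A B : Type} (m : A -> B) (t : tree A) : tree B :=
  match t with Node a cs => Node (m a) (List.map (tmap m) cs) end.

(* Contexts: forests with exactly one leaf replaced by a hole.              *)
(* [CHole f] is  [] + f ;  [CIn a c f] is  a[c] + f.                        *)
Inductive context (A : Type) : Type :=
| CHole : forest A -> context A
| CIn : A -> context A -> forest A -> context A.
Arguments CHole {A} f.
Arguments CIn {A} a c f.

Fixpoint ctx_forest {A : Type} (c : context A) : forest (option A) :=
  match c with
  | CHole f => Node None nil :: List.map (tmap Some) f
  | CIn a c' f => Node (Some a) (ctx_forest c') :: List.map (tmap Some) f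
  end.

Definition ceq {A : Type} (v w : context A) : Prop :=
  feq (ctx_forest v) (ctx_forest w).

Fixpoint fill {A : Type} (c : context A) (g : forest A) : forest A :=
  match c with
  | CHole f => (g ++ f)%list
  | CIn a c' f => Node a (fill c' g) :: f
  end.

Definition addsib {A : Type} (c : context A) (g : forest A) : context A :=
  match c with
  | CHole f => CHole (f ++ g)%list
  | CIn a c' f => CIn a c' (f ++ g)%list
  end.

Fixpoint ccomp {A : Type} (v w : context A) : context A :=
  match v with
  | CHole f => addsib w f
  | CIn a c' f => CIn a (ccomp c' w) f
  end.

(* Morphisms Sigma^Delta -> F, given on the raw representatives: they must  *)
(* be constant on equivalence classes and preserve all operations.          *)
Definition free_morphism (S : Type) (F : forest_algebra)
  (phH : forest S -> fH F) (phV : context S -> fV F) : Prop :=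
  (((forall f g, feq f g -> phH f = phH g)) /\ ((forall v w, ceq v w -> phV v = phV w)) /\ ((forall f g, phH (f ++ g)%list = hadd (phH f) (phH g)) /\
      phH nil = hzero F) /\ ((forall v w, phV (ccomp v w) = vmul (phV v) (phV w)) /\
      phV (CHole nil) = vone F) /\ ((forall v f, phH (fill v f) = act (phV v) (phH f))) /\ ((forall f, phV (CHole f) = ins (phH f)))).

Fixpoint path_in {A : Type} (f : forest A) (p : list A) : Prop :=
  match p with
  | nil => True
  | a :: p' => exists cs, List.In (Node a cs) f /\ path_in cs p'
  end.

Definition same_paths {A : Type} (f g : forest A) : Prop :=
  forall p, path_in f p <-> path_in g p.

Definition two_distributive (F : forest_algebra) : Prop :=
  forall (S : finType) (phH : forest S -> fH F) (phV : context S -> fV F),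
    free_morphism phH phV ->
    forall (v : context S) (f1 f2 : forest S),
      same_paths f1 f2 ->
      phH (fill v (f1 ++ f2)%list) = phH (fill v f1 ++ fill v f2)%list.

(* Main.v *)
Require Import Defs.
From mathcomp Require Import all_boot.
From Stdlib Require List.
From Stdlib Require Import FunctionalExtensionality PropExtensionality ProofIrrelevance ClassicalEpsilon Classical.

Set Implicit Arguments.
Unset Strict Implicit.
Unset Printing Implicit Defensive.


Definition tree_ind2 (A : Type) (P : tree A -> Prop)
  (IH : forall a cs, (forall c, List.In c cs -> P c) -> P (Node a cs)) : forall t, P t :=
  fix rec t := match t with Node a cs => IH a cs
    ((fix go (l : list (tree A)) : forall c, List.In c l -> P c :=
       match l with
       | nil => fun c H => False_ind _ H
       | x :: l' => fun c H => match H with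
                     | or_introl E => eq_ind x P (rec x) c E
                     | or_intror H' => go l' c H' end end) cs) end.

Section Eval.
Variables (F : forest_algebra) (A : Type) (phi : A -> fH F -> fH F).
Fixpoint gevt (t : tree A) : fH F :=
  match t with Node a cs => phi a ((fix gf (l : list (tree A)) : fH F :=
     match l with nil => hzero F | t :: l' => hadd (gevt t) (gf l') end) cs) end.
Fixpoint gevf (l : forest A) : fH F :=
  match l with nil => hzero F | t :: l' => hadd (gevt t) (gevf l') end.
Lemma gevt_Node a cs : gevt (Node a cs) = phi a (gevf cs).
Proof. reflexivity. Qed.
Lemma gevf_app f g : gevf (f ++ g)%list = hadd (gevf f) (gevf g).
Proof. elim: f => [|t f IH] /=; first by rewrite hadd0l. by rewrite IH haddA. Qed.
End Eval.


Section Semi.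
Variable F : forest_algebra.
Implicit Types x y z : fH F.
Lemma haddAC x y z : hadd (hadd x y) z = hadd (hadd x z) y.
Proof. by rewrite -haddA [hadd y z]haddC haddA. Qed.
Lemma haddCA x y z : hadd x (hadd y z) = hadd y (hadd x z).
Proof. by rewrite haddA [hadd x y]haddC -haddA. Qed.

Variables (A : Type) (phi : A -> fH F -> fH F).
Lemma gev_in t f : List.In t f -> hadd (gevt phi t) (gevf phi f) = gevf phi f.
Proof.
elim: f => [|t' f IH] //= [->|H]; first by rewrite haddA haddI.
by rewrite haddCA IH.
Qed.
Lemma gev_sub f g : (forall c, List.In c f -> exists2 d, List.In d g & gevt phi c = gevt phi d) ->
  hadd (gevf phi f) (gevf phi g) = gevf phi g.
Proof.
elim: f => [|t f IH] H /=; first by rewrite hadd0l.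
rewrite -haddA IH; last by move=> c Hc; apply: H; right.
have [d Hd ->] := H t (or_introl erefl). exact: gev_in.
Qed.
Lemma gev_teq t t' : teq t t' -> gevt phi t = gevt phi t'.
Proof.
elim/tree_ind2: t t' => a cs IH t' H; inversion H; subst.
rewrite !gevt_Node; congr (phi a _).
have E1 : hadd (gevf phi cs) (gevf phi ds) = gevf phi ds.
  apply: gev_sub.
  by move=> c Hc; have [d Hd Hcd] := H2 c Hc; exists d => //; apply: IH.
have E2 : hadd (gevf phi ds) (gevf phi cs) = gevf phi cs.
  apply: gev_sub.
  by move=> d Hd; have [c Hc Hcd] := H4 d Hd; exists c => //; symmetry; apply: IH.
by rewrite -E2 haddC E1.
Qed.
Lemma gev_feq f g : feq f g -> gevf phi f = gevf phi g.
Proof.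
case=> H1 H2.
have E1 : hadd (gevf phi f) (gevf phi g) = gevf phi g.
  apply: gev_sub.
  by move=> c Hc; have [d Hd Hcd] := H1 c Hc; exists d => //; apply: gev_teq.
have E2 : hadd (gevf phi g) (gevf phi f) = gevf phi f.
  apply: gev_sub.
  by move=> d Hd; have [c Hc Hcd] := H2 d Hd; exists c => //; symmetry; apply: gev_teq.
by rewrite -E2 haddC E1.
Qed.
Lemma gevf_cons t f : gevf phi (t :: f) = hadd (gevt phi t) (gevf phi f).
Proof. by []. Qed.
End Semi.
Lemma gevf_tmap (F : forest_algebra) (A : Type) (phi : A -> fH F -> fH F) (B : Type) (m : B -> A) f :
  gevf phi (List.map (tmap m) f) = gevf (fun b => phi (m b)) f.
Proof.
have mc : forall x l, List.map (tmap m) (x :: l) = tmap m x :: List.map (tmap m) l by [].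
have tt : forall t, gevt phi (tmap m t) = gevt (fun b => phi (m b)) t.
  elim/tree_ind2 => b cs IHt.
  have -> : tmap m (Node b cs) = Node (m b) (List.map (tmap m) cs) by [].
  rewrite !gevt_Node; congr (phi _ _).
  elim: cs IHt => [|c cs IHc] H //.
  rewrite mc !gevf_cons H ?IHc //; [by move=> x Hx; apply: H; right| by left].
elim: f => [|t f IH] //. by rewrite mc !gevf_cons IH tt.
Qed.


Section Free.
Variables (F : forest_algebra) (A : Type) (l : A -> fV F).
Definition ev (f : forest A) : fH F := gevf (fun a => act (l a)) f.
Fixpoint evc (c : context A) : fV F :=
  match c with
  | CHole f => ins (ev f)
  | CIn a c' f => vmul (ins (ev f)) (vmul (l a) (evc c'))
  end.
Arguments ev : simpl never.
Lemma ev_cons a cs f : ev (Node a cs :: f) = hadd (act (l a) (ev cs)) (ev f).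
Proof. by rewrite /ev. Qed.
Lemma ev_app f g : ev (f ++ g)%list = hadd (ev f) (ev g).
Proof. exact: gevf_app. Qed.
Lemma ev_fill c g : ev (fill c g) = act (evc c) (ev g).
Proof.
elim: c => [f|a c IH f] /=; first by rewrite ev_app insE haddC.
by rewrite ev_cons IH !actM insE haddC.
Qed.
Lemma ins_add x y : ins (hadd x y) = vmul (ins x) (ins y) :> fV F.
Proof. apply: act_faithful => h; by rewrite actM !insE haddA. Qed.
Lemma ins0 : ins (hzero F) = vone F.
Proof. apply: act_faithful => h; by rewrite act1 insE hadd0l. Qed.
Lemma evc_addsib w f : evc (addsib w f) = vmul (ins (ev f)) (evc w).
Proof.
case: w => [g|a c g] /=; apply: act_faithful => h; rewrite !actM !insE ev_app.
  by rewrite [hadd (ev g) _]haddC haddA.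
by rewrite [hadd (ev g) _]haddC haddA.
Qed.
Lemma evc_ccomp v w : evc (ccomp v w) = vmul (evc v) (evc w).
Proof.
elim: v => [f|a c IH f] /=; first exact: evc_addsib.
by rewrite IH !vmulA.
Qed.
Lemma evc_ctx c h : act (evc c) h =
  gevf (fun (o : option A) x => match o with None => h | Some a => act (l a) x end) (ctx_forest c).
Proof.
elim: c => [f|a c IH f].
  rewrite [evc _]/= [ctx_forest _]/= gevf_cons gevt_Node gevf_tmap insE haddC //.
rewrite [evc _]/= [ctx_forest (CIn _ _ _)]/= gevf_cons gevt_Node gevf_tmap !actM insE -IH haddC //.
Qed.
Lemma evc_ceq v w : ceq v w -> evc v = evc w.
Proof. move=> H; apply: act_faithful => h; rewrite !evc_ctx; exact: gev_feq. Qed.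
Lemma ev_free : free_morphism ev evc.
Proof.
split; first by move=> f g; apply: gev_feq.
split; first exact: evc_ceq.
split; first by split; [exact: ev_app|].
split; first by split; [exact: evc_ccomp| exact: ins0].
split; first exact: ev_fill.
by [].
Qed.
End Free.


Section Gen.
Variables (F : forest_algebra) (A K : Type) (l : A -> fV F) (kap : A -> forest A -> K).

Fixpoint kpath (f : forest A) (q : list K) : Prop :=
  match q with nil => True
  | k :: q' => exists a cs, List.In (Node a cs) f /\ kap a cs = k /\ kpath cs q' end.

Fixpoint tsize (t : tree A) : nat :=
  match t with Node _ cs => ((fix fs (l : list (tree A)) : nat :=
     match l with nil => 0 | t :: l' => tsize t + fs l' end) cs).+1 end.
Fixpoint fsize (f : forest A) : nat :=
  match f with nil => 0 | t :: f' => tsize t + fsize f' end.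
Lemma fsize_cons a cs f : fsize (Node a cs :: f) = (fsize cs).+1 + fsize f.
Proof. by []. Qed.
Lemma fsize_app f g : fsize (f ++ g)%list = fsize f + fsize g.
Proof. elim: f => [|t f IH] //=; by rewrite IH addnA. Qed.

Lemma kpath_app f g q : kpath (f ++ g)%list q <-> kpath f q \/ kpath g q.
Proof.
case: q => [|k q] /=; first by split; [left|].
split.
  move=> [a [cs [H1 [H2 H3]]]]; case/List.in_app_iff: H1 => H1.
    by left; exists a, cs.
  by right; exists a, cs.
case=> [[a [cs [H1 [H2 H3]]]]|[a [cs [H1 [H2 H3]]]]]; exists a, cs;
  (split; last by []); apply/List.in_app_iff; by [left|right].
Qed.

Lemma kpath_cons b cs f k q : kpath (Node b cs :: f) (k :: q) <->
  (kap b cs = k /\ kpath cs q) \/ kpath f (k :: q).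
Proof.
split.
  move=> [a [cs' [[E|H1] [H2 H3]]]].
    by case: E => -> ->; left.
  by right; exists a, cs'.
case=> [[H2 H3]|[a [cs' [H1 [H2 H3]]]]].
  by exists b, cs; split; [left|].
by exists a, cs'; split; [right|].
Qed.

Hypothesis H1 : forall a a' cs cs', kap a cs = kap a' cs' -> a = a'.
Hypothesis H2 : forall a cs cs', kap a cs = kap a cs' -> kap a (cs ++ cs')%list = kap a cs.
Hypothesis H3 : forall a cs cs', kap a cs = kap a cs' ->
  act (l a) (ev l (cs ++ cs')%list) = hadd (act (l a) (ev l cs)) (act (l a) (ev l cs')).

Lemma semi1 (X Y Z : fH F) : hadd Y Z = Y -> hadd (hadd X Y) (hadd X Z) = hadd X Y.
Proof.
move=> E; rewrite haddA.
have -> : hadd (hadd X Y) X = hadd X Y by rewrite haddC haddA haddI.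
by rewrite -haddA E.
Qed.

Lemma collect f a k : (exists cs, List.In (Node a cs) f /\ kap a cs = k) ->
  exists C, fsize C < fsize f /\ kap a C = k /\ (forall q, kpath C q <-> kpath f (k :: q))
    /\ hadd (ev l f) (act (l a) (ev l C)) = ev l f.
Proof.
elim: f => [|[b cs] f IH] [cs0 [Hin Hk]]; first by case: Hin.
have [P1|nP1] := classic (kap b cs = k);
have [P2|nP2] := classic (exists cs', List.In (Node a cs') f /\ kap a cs' = k).
- have eb : b = a by apply: (H1 (cs:=cs) (cs':=cs0)); rewrite P1 Hk.
  subst b. have [C [Cs [Ck [Cp Cv]]]] := IH P2.
  exists (cs ++ C)%list; split.
    by rewrite fsize_app fsize_cons addSn ltnS leq_add2l ltnW.
  split; first by rewrite H2 // P1 Ck.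
  split.
    move=> q; rewrite kpath_app Cp kpath_cons.
    by split; [case=> H; [left; split|right] | case=> [[_ H]|H]; [left|right]].
  rewrite ev_cons H3; last by rewrite P1 Ck.
  exact: semi1.
- have eb : b = a by apply: (H1 (cs:=cs) (cs':=cs0)); rewrite P1 Hk.
  subst b. exists cs; split.
    by rewrite fsize_cons addSn ltnS leq_addr.
  split; first by [].
  split.
    move=> q; rewrite kpath_cons; split; first by move=> H; left.
    case=> [[_ H]|[a' [cs' [Hi [Hk' _]]]]] //.
    have ea : a' = a by apply: (H1 (cs:=cs') (cs':=cs)); rewrite Hk' P1.
    by subst a'; case: nP2; exists cs'.
  by rewrite ev_cons haddC haddA haddI.
- have [C [Cs [Ck [Cp Cv]]]] := IH P2.
  exists C; split.
    rewrite fsize_cons; apply: (leq_trans Cs); exact: leq_addl.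
  split; first by [].
  split.
    move=> q; rewrite Cp kpath_cons; split; first by right.
    by case=> // [[E _]].
  by rewrite ev_cons -haddA Cv.
- exfalso; case: Hin => [E|Hin].
    by case: E => eb ecs; subst; apply: nP1.
  by apply: nP2; exists cs0.
Qed.

Lemma gen_sub n : forall f, fsize f < n -> forall g, (forall q, kpath g q -> kpath f q) ->
  hadd (ev l f) (ev l g) = ev l f.
Proof.
elim: n => [|n IHn] f Hf //.
elim=> [|[a ds] g IHg] Hsub; first by rewrite /ev /= hadd0r.
have Hk : kpath f [:: kap a ds].
  by apply: Hsub; exists a, ds; split; [left|].
have [C [Cs [Ck [Cp Cv]]]] : exists C, fsize C < fsize f /\ kap a C = kap a ds /\
    (forall q, kpath C q <-> kpath f (kap a ds :: q))
    /\ hadd (ev l f) (act (l a) (ev l C)) = ev l f.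
  apply: collect.
  case: Hk => [a' [cs [Hi [Hk _]]]].
  have ea : a' = a by apply: (H1 (cs:=cs) (cs':=ds)).
  by subst a'; exists cs.
have EC : hadd (ev l C) (ev l ds) = ev l C.
  apply: IHn.
    by rewrite ltnS in Hf; apply: leq_trans Cs Hf.
  move=> q Hq; apply/Cp; apply: Hsub; apply/kpath_cons; by left.
have E3 := H3 Ck.
rewrite ev_app EC in E3.
have E4 : hadd (ev l f) (act (l a) (ev l ds)) = ev l f.
  by rewrite -{1}Cv -haddA -E3 Cv.
rewrite ev_cons haddA E4 IHg //.
move=> q Hq; apply: Hsub.
case: q Hq => [|k q] Hq //. by apply/kpath_cons; right.
Qed.

Lemma gen_eq f g : (forall q, kpath f q <-> kpath g q) -> ev l f = ev l g.
Proof.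
move=> H.
have E1 := @gen_sub (fsize f).+1 f (ltnSn _) g (fun q => proj2 (H q)).
have E2 := @gen_sub (fsize g).+1 g (ltnSn _) f (fun q => proj1 (H q)).
by rewrite -E1 haddC E2.
Qed.
End Gen.


Lemma kpath_path (A : Type) (f : forest A) q :
  kpath (fun (a : A) (_ : forest A) => a) f q <-> path_in f q.
Proof.
elim: q f => [|k q IH] f //=.
split.
  by move=> [a [cs [Hi [Ea Hp]]]]; subst a; exists cs; split => //; apply/IH.
by move=> [cs [Hi Hp]]; exists k, cs; split => //; split => //; apply/IH.
Qed.

Lemma dist_paths (G : forest_algebra) (S : Type) (l : S -> fV G) f g :
  distributive G -> same_paths f g -> ev l f = ev l g.
Proof.
move=> D Hp; apply: (@gen_eq G S S l (fun a _ => a)).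
- by [].
- by [].
- by move=> a cs cs' _; rewrite ev_app D.
- by move=> q; rewrite !kpath_path.
Qed.

Lemma ev_snd (G1 G2 : forest_algebra) (S : Type) (l : S -> fV (wreath G1 G2)) f :
  snd (ev l f) = ev (fun a => snd (l a)) f.
Proof.
rewrite /ev.
have tt : forall t, snd (gevt (fun a => act (l a)) t) = gevt (fun a => act (snd (l a))) t.
  elim/tree_ind2 => a cs IH; rewrite !gevt_Node /=; congr act.
  elim: cs IH => [|c cs IHc] H //.
  rewrite !gevf_cons /= H ?IHc //; [by move=> x Hx; apply: H; right| by left].
elim: f => [|t f IH] //. by rewrite !gevf_cons /= IH tt.
Qed.

Lemma back (F G1 G2 : forest_algebra) : distributive G1 -> distributive G2 ->
  divides F (wreath G1 G2) -> two_distributive F.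
Proof.
move=> D1 D2 [H0 [V0 [eH [eV [rH [rV [Hsub [Hcong Hiso]]]]]]]].
case: Hsub => [S0 [Sadd [S1 [Smul [Sact Sins]]]]].
case: Hcong => [Hr [Hs [Ht [Vr [Vs [Vt [Cadd [Cmul [Cact Cins]]]]]]]]].
case: Hiso => [[IH0 IV0] [[Iinj Vinj] [[Isurj Vsurj] [[Iadd I0] [[Imul I1] [Iact Iins]]]]]].
move=> S phH phV Hfm v f1 f2 Hp.
case: Hfm => [Ff [Fc [[Fapp Fnil] [[Fcomp Fone] [Ffill Fins]]]]].
pose l a := rV (phV (CIn a (CHole nil) nil)).
pose W := wreath G1 G2.
have Hl : forall a, V0 (l a) by move=> a; apply: IV0.
pose Cl f := H0 (ev l f) /\ eH (rH (phH f)) (ev l f).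
have Hforest : forall f, (forall t, List.In t f -> Cl [:: t]) -> Cl f.
  elim=> [|t f IH] Ht'.
    rewrite /Cl Fnil; split; first exact: S0.
    exact: I0.
  have [Ht1 Ht2] := Ht' t (or_introl erefl).
  have [Hf1 Hf2] := IH (fun t' H => Ht' t' (or_intror H)).
  have E : (t :: f) = ([:: t] ++ f)%list by [].
  rewrite /Cl E Fapp ev_app; split; first exact: Sadd.
  apply: (Ht _ (hadd (rH (phH [:: t])) (rH (phH f)))).
  - exact: IH0.
  - by apply: Sadd; apply: IH0.
  - exact: Sadd.
  - exact: Iadd.
  - apply: Cadd => //; exact: IH0.
have Htree : forall t, Cl [:: t].
  elim/tree_ind2 => a cs IH.
  have [Hc1 Hc2] := Hforest cs IH.
  have E1 : phH [:: Node a cs] = act (phV (CIn a (CHole nil) nil)) (phH cs).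
    by rewrite -Ffill /= List.app_nil_r.
  have E2 : ev l [:: Node a cs] = act (l a) (ev l cs).
    by rewrite ev_cons; apply: hadd0r.
  rewrite /Cl E1 E2; split; first exact: Sact.
  apply: (Ht _ (act (l a) (rH (phH cs)))).
  - exact: IH0.
  - by apply: Sact; [|apply: IH0].
  - exact: Sact.
  - exact: Iact.
  - apply: Cact => //; first [exact: IH0|exact: Vr|exact: Hl|idtac].
have Hall : forall f, Cl f by move=> f; apply: Hforest => t _; apply: Htree.
have Hev : ev l (fill v (f1 ++ f2))%list = ev l (fill v f1 ++ fill v f2)%list.
  rewrite ev_app !ev_fill ev_app.
  have Eb : snd (ev l f1) = snd (ev l f2) by rewrite !ev_snd; apply: dist_paths.
  move: Eb; case: (ev l f1) => [a1 b1]; case: (ev l f2) => [a2 b2] /= <-.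
  case: (evc l v) => [gg w].
  by rewrite /= /wact /wadd /= !haddI D1.
apply: Iinj.
have [L1 L2] := Hall (fill v (f1 ++ f2))%list.
have [R1 R2] := Hall (fill v f1 ++ fill v f2)%list.
rewrite Hev in L1 L2.
apply: (Ht _ (ev l (fill v f1 ++ fill v f2)%list)) => //; try exact: IH0.
exact: Hs.
Qed.


Section Letters.
Variable B : Type.
Fixpoint tlet (t : tree B) : list B :=
  match t with Node a cs => a :: (fix fl (l : list (tree B)) : list B :=
     match l with nil => nil | t :: l' => (tlet t ++ fl l')%list end) cs end.
Fixpoint flet (f : forest B) : list B :=
  match f with nil => nil | t :: f' => (tlet t ++ flet f')%list end.
Lemma tlet_Node a cs : tlet (Node a cs) = a :: flet cs.
Proof. by []. Qed.
Lemma flet_app f g : flet (f ++ g)%list = (flet f ++ flet g)%list.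
Proof. elim: f => [|t f IH] //=; by rewrite IH List.app_assoc. Qed.
End Letters.

Lemma gevf_ext (F : forest_algebra) (A : Type) (p1 p2 : A -> fH F -> fH F) f :
  (forall x, List.In x (flet f) -> p1 x = p2 x) -> gevf p1 f = gevf p2 f.
Proof.
have tt : forall t, (forall x, List.In x (tlet t) -> p1 x = p2 x) -> gevt p1 t = gevt p2 t.
  elim/tree_ind2 => a cs IH H; rewrite !gevt_Node (H a (or_introl erefl)); congr (p2 a _).
  have H' : forall x, List.In x (flet cs) -> p1 x = p2 x by move=> x Hx; apply: H; right.
  elim: cs IH H' {H} => [|c cs IHc] IH H' //.
  rewrite !gevf_cons IH; [|by left|by move=> x Hx; apply: H'; apply/List.in_app_iff; left].
  rewrite IHc //; first by move=> x Hx; apply: IH; right.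
  by move=> x Hx; apply: H'; apply/List.in_app_iff; right.
elim: f => [|t f IH] H //.
rewrite !gevf_cons tt; last by move=> x Hx; apply: H; apply/List.in_app_iff; left.
by rewrite IH // => x Hx; apply: H; apply/List.in_app_iff; right.
Qed.

Lemma ev_conv (F : forest_algebra) (A B : Type) (l1 : A -> fV F) (l2 : B -> fV F) (m : B -> A) f :
  (forall x, List.In x (flet f) -> l1 (m x) = l2 x) -> ev l1 (List.map (tmap m) f) = ev l2 f.
Proof.
move=> H; rewrite /ev gevf_tmap; apply: gevf_ext => x Hx; by rewrite H.
Qed.

Lemma path_conv (A B : Type) (m : B -> A) f q :
  path_in (List.map (tmap m) f) q <-> exists p, path_in f p /\ q = List.map m p.
Proof.
split.
  elim: q f => [|k q IH] f /=; first by exists nil.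
  move=> [cs' [Hi Hp]].
  case/List.in_map_iff: Hi => [[a cs] [E Hi]].
  case: E => Ek Ecs; subst.
  have [p [Hp' ->]] := IH _ Hp.
  by exists (a :: p); split => //; exists cs.
move=> [p [Hp ->]].
elim: p f Hp => [|a p IH] f //= [cs [Hi Hp]].
exists (List.map (tmap m) cs); split; last exact: IH.
by apply/List.in_map_iff; exists (Node a cs).
Qed.

Fixpoint idx (X : Type) (l : list X) (x : X) : nat :=
  match l with nil => 0
  | y :: l' => if excluded_middle_informative (x = y) then 0 else (idx l' x).+1 end.

Lemma idx_ok (X : Type) (l : list X) x d : List.In x l -> idx l x < size l /\ nth d l (idx l x) = x.
Proof.
elim: l => [|y l IH] //= H.
case: excluded_middle_informative => [e|ne]; first by subst.
case: H => [E|H]; first by case: ne.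
by have [H1 H2] := IH H.
Qed.

Definition Pset (X : Type) (f : forest X) : list X -> Prop := fun p => p <> nil /\ path_in f p.

Lemma TD (F : forest_algebra) : two_distributive F ->
  forall (u : fV F) (cs cs' : forest (fV F)), Pset cs = Pset cs' ->
  act u (ev id (cs ++ cs')%list) = hadd (act u (ev id cs)) (act u (ev id cs')).
Proof.
move=> TDF u cs cs' EP.
pose L := u :: flet (cs ++ cs')%list.
pose n := size (flet (cs ++ cs')%list).
pose lS (i : 'I_n.+1) := nth u L i.
pose c (x : fV F) : 'I_n.+1 := inord (idx L x).
have Hc : forall x, List.In x L -> lS (c x) = x.
  move=> x Hx; have [H1 H2] := idx_ok u Hx.
  by rewrite /lS /c inordK.
have Hconv : forall f, (forall x, List.In x (flet f) -> List.In x L) ->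
    ev lS (List.map (tmap c) f) = ev id f.
  by move=> f Hf; apply: ev_conv => x Hx; apply: Hc; apply: Hf.
have Hcs : ev lS (List.map (tmap c) cs) = ev id cs.
  apply: Hconv => x Hx; right; rewrite flet_app; apply/List.in_app_iff; by left.
have Hcs' : ev lS (List.map (tmap c) cs') = ev id cs'.
  apply: Hconv => x Hx; right; rewrite flet_app; apply/List.in_app_iff; by right.
have Hu : lS (c u) = u by apply: Hc; left.
have sp : same_paths (List.map (tmap c) cs) (List.map (tmap c) cs').
  move=> q; rewrite !path_conv.
  have E : forall p, path_in cs p <-> path_in cs' p.
    case=> [|a p] //=.
    have := equal_f EP (a :: p); rewrite /Pset => E.
    split => H.
      by have [] : (a :: p <> nil /\ path_in cs' (a :: p)) by rewrite -E.
    by have [] : (a :: p <> nil /\ path_in cs (a :: p)) by rewrite E.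
  by split => [[p [Hp ->]]|[p [Hp ->]]]; exists p; split => //; apply/E.
have := TDF _ _ _ (ev_free lS) (CIn (c u) (CHole nil) nil) _ _ sp.
have Efill : forall g, fill (CIn (c u) (CHole nil) nil) g = [:: Node (c u) (g ++ nil)%list] by [].
rewrite !Efill !List.app_nil_r.
have E1 : forall g, ev lS [:: Node (c u) g] = act u (ev lS g).
  by move=> g; rewrite ev_cons Hu; apply: hadd0r.
have E2 : forall a g f, ((Node a g :: nil) ++ f)%list = Node a g :: f by [].
rewrite ev_app !E1 ev_app Hcs Hcs' -ev_app.
move=> ->; rewrite ev_app !E1 Hcs Hcs' //.
Qed.


Section DA.
Variable T : Type.
Definition dH := T -> Prop.
Definition dadd (A B : dH) : dH := fun x => A x \/ B x.
Definition dzero : dH := fun _ => False.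
Lemma seteq (A B : dH) : (forall x, A x <-> B x) -> A = B.
Proof.
move=> H; apply: functional_extensionality => x; apply: propositional_extensionality; exact: H.
Qed.
Definition dV := {phi : dH -> dH | forall A B, phi (dadd A B) = dadd (phi A) (phi B)}.
Definition dact (v : dV) (A : dH) : dH := proj1_sig v A.
Lemma dmul_prop (v w : dV) : forall A B,
  dact v (dact w (dadd A B)) = dadd (dact v (dact w A)) (dact v (dact w B)).
Proof. move=> A B; by rewrite /dact (proj2_sig w) (proj2_sig v). Qed.
Definition dmul (v w : dV) : dV := exist _ (fun A => dact v (dact w A)) (dmul_prop v w).
Definition done : dV := exist (fun phi : dH -> dH => forall A B, phi (dadd A B) = dadd (phi A) (phi B)) (fun A => A) (fun A B => erefl).
Lemma dins_prop (A : dH) : forall B C, dadd A (dadd B C) = dadd (dadd A B) (dadd A C).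
Proof. move=> B C; apply: seteq => x; rewrite /dadd; tauto. Qed.
Definition dins (A : dH) : dV := exist _ (dadd A) (dins_prop A).
Lemma dV_eq (v w : dV) : (forall A, dact v A = dact w A) -> v = w.
Proof.
case: v => f pf; case: w => g pg /= H.
have E : f = g := functional_extensionality _ _ H.
subst g; f_equal; apply: proof_irrelevance.
Qed.
Lemma daddA x y z : dadd x (dadd y z) = dadd (dadd x y) z.
Proof. apply: seteq => a; rewrite /dadd; tauto. Qed.
Lemma dadd0l x : dadd dzero x = x.
Proof. apply: seteq => a; rewrite /dadd /dzero; tauto. Qed.
Lemma dadd0r x : dadd x dzero = x.
Proof. apply: seteq => a; rewrite /dadd /dzero; tauto. Qed.
Lemma daddC x y : dadd x y = dadd y x.
Proof. apply: seteq => a; rewrite /dadd; tauto. Qed.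
Lemma daddI x : dadd x x = x.
Proof. apply: seteq => a; rewrite /dadd; tauto. Qed.
Lemma dmulA u v w : dmul u (dmul v w) = dmul (dmul u v) w.
Proof. by apply: dV_eq. Qed.
Lemma dmul1l v : dmul done v = v.
Proof. by apply: dV_eq. Qed.
Lemma dmul1r v : dmul v done = v.
Proof. by apply: dV_eq. Qed.
Lemma dactM v w h : dact (dmul v w) h = dact v (dact w h).
Proof. by []. Qed.
Lemma dact1 h : dact done h = h.
Proof. by []. Qed.
Lemma dinsE h h' : dact (dins h) h' = dadd h h'.
Proof. by []. Qed.
Lemma dzero_onto h : exists v, dact v dzero = h.
Proof. by exists (dins h); rewrite dinsE dadd0r. Qed.
Definition DA : forest_algebra :=
  @ForestAlgebra dH dV dadd dzero dmul done dact dins daddA dadd0l dadd0r daddC daddI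
    dmulA dmul1l dmul1r dactM dact1 dV_eq dinsE dzero_onto.
Lemma DA_dist : distributive DA.
Proof. move=> v h1 h2; exact: (proj2_sig v). Qed.
End DA.

Definition preF (Y : Type) (y : Y) (A : dH (list Y)) : dH (list Y) :=
  fun q => match q with nil => False | x :: q' => x = y /\ (q' = nil \/ A q') end.
Lemma preF_prop (Y : Type) (y : Y) : forall A B, preF y (dadd A B) = dadd (preF y A) (preF y B).
Proof. move=> A B; apply: seteq => [[|x q]] /=; rewrite /dadd /=; tauto. Qed.
Definition preV (Y : Type) (y : Y) : fV (DA (list Y)) := exist _ (preF y) (preF_prop y).


Lemma path_in_app (A : Type) (f g : forest A) p : path_in (f ++ g)%list p <-> path_in f p \/ path_in g p.
Proof. by rewrite -!kpath_path kpath_app. Qed.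

Section Fwd.
Variable F : forest_algebra.
Hypothesis TDF : two_distributive F.
Definition X := fV F.
Definition K := (X * (list X -> Prop))%type.
Definition G2 := DA (list X).
Definition G1 := DA (list K).
Definition W := wreath G1 G2.
Definition kapK (a : X) (cs : forest X) : K := (a, Pset cs).
Definition Aset (f : forest X) : list K -> Prop := fun q => q <> nil /\ kpath kapK f q.
Definition img (f : forest X) : fH W := (Aset f, Pset f).
Definition Lu (u : X) : fV W := (fun P => preV (u, P), preV u).
Definition val (f : forest X) : fH F := ev id f.

Lemma img_nil : img nil = hzero W.
Proof.
rewrite /img; congr pair; apply: seteq => [[|k q]]; rewrite /Aset /Pset /= /dzero; firstorder.
Qed.

Lemma img_app f g : img (f ++ g)%list = hadd (img f) (img g).
Proof.
rewrite /img; congr pair; apply: seteq => q; rewrite /Aset /Pset /= /dadd ?kpath_app ?path_in_app; tauto.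
Qed.

Lemma img_node u t : act (Lu u) (img t) = img [:: Node u t].
Proof.
rewrite /img; congr pair.
  apply: seteq => [[|k q]] /=; rewrite /preF /Aset; first by split => [[]|[]].
  rewrite kpath_cons; split.
    case=> -> H; split => //; left; split => //.
    by case: q H => [|k' q] [] // [].
  case=> _ [[<- H]|[? [? [[] _]]]]; split => //.
  by case: q H => [|k' q] H; [left|right].
apply: seteq => [[|k q]] /=; rewrite /preF /Pset; first by split => [[]|[]].
split.
  case=> -> H; split => //; exists t; split; first by left.
  by case: H => [->|[]].
case=> _ [cs [[E|[]] H]]; case: E => -> ->; split => //.
by case: q H => [|k' q] H; [left|right].
Qed.

Lemma val_cons a cs f : val (Node a cs :: f) = hadd (act a (val cs)) (val f).
Proof. exact: ev_cons. Qed.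
Lemma val_node a cs : val [:: Node a cs] = act a (val cs).
Proof. rewrite val_cons; exact: hadd0r. Qed.
Lemma val_app f g : val (f ++ g)%list = hadd (val f) (val g).
Proof. exact: ev_app. Qed.

Lemma key f g : img f = img g -> val f = val g.
Proof.
case=> EA _.
apply: (@gen_eq F X K id kapK).
- by move=> a a' cs cs' [].
- move=> a cs cs' [E]; rewrite /kapK; congr pair.
  apply: seteq => p; rewrite /Pset path_in_app.
  split; last by case=> Hn H; split => //; left.
  case=> Hn [H|H]; split => //; try done.
  have : Pset cs' p by split.
  by rewrite -E; case.
- move=> a cs cs' [E]; exact: TD.
- case=> [|k q] //.
  have := equal_f EA (k :: q); rewrite /Aset => E.
  split => H.
    by have [] : (k :: q <> nil /\ kpath kapK g (k :: q)) by rewrite -E.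
  by have [] : (k :: q <> nil /\ kpath kapK f (k :: q)) by rewrite E.
Qed.

Definition impl (v : fV W) (u : fV F) : Prop :=
  forall t, exists t', act v (img t) = img t' /\ val t' = act u (val t).

Definition repw (h : fH F) : X :=
  proj1_sig (constructive_indefinite_description _ (act_zero_onto h)).
Definition rep (h : fH F) : forest X := [:: Node (repw h) nil].
Lemma val_rep h : val (rep h) = h.
Proof.
rewrite /rep val_node /repw; case: constructive_indefinite_description => w /= <-.
by [].
Qed.

Lemma impl_uniq v u u' : impl v u -> impl v u' -> u = u'.
Proof.
move=> H H'; apply: act_faithful => h.
have [t1 [E1 V1]] := H (rep h).
have [t2 [E2 V2]] := H' (rep h).
rewrite -(val_rep h) -V1 -V2; apply: key; by rewrite -E1 -E2.
Qed.

Lemma impl_mul v w u u' : impl v u -> impl w u' -> impl (vmul v w) (vmul u u').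
Proof.
move=> Hv Hw t.
have [t1 [E1 V1]] := Hw t.
have [t2 [E2 V2]] := Hv t1.
exists t2; split; first by rewrite actM E1 E2.
by rewrite actM V2 V1.
Qed.

Lemma impl_one : impl (vone W) (vone F).
Proof. by move=> t; exists t; rewrite !act1. Qed.

Lemma impl_ins s : impl (ins (img s)) (ins (val s)).
Proof.
move=> t; exists (s ++ t)%list; split; first by rewrite insE img_app.
by rewrite insE val_app.
Qed.

Lemma impl_L u : impl (Lu u) u.
Proof.
move=> t; exists [:: Node u t]; split; first exact: img_node.
exact: val_node.
Qed.

Lemma fwd_divides : divides F W.
Proof.
pose H0 (z : fH W) := exists t, z = img t.
pose V0 (v : fV W) := exists u, impl v u.
pose eH (z z' : fH W) := exists t t', z = img t /\ z' = img t' /\ val t = val t'.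
pose eV (v v' : fV W) := exists u, impl v u /\ impl v' u.
exists H0, V0, eH, eV, (fun h => img (rep h)), Lu.
split.
  split; first by exists nil; rewrite img_nil.
  split; first by move=> x y [t ->] [s ->]; exists (t ++ s)%list; rewrite img_app.
  split; first by exists (vone F); exact: impl_one.
  split; first by move=> v w [u Hu] [u' Hu']; exists (vmul u u'); exact: impl_mul.
  split; first by move=> v h [u Hu] [t ->]; have [t' [E _]] := Hu t; exists t'.
  by move=> h [t ->]; exists (ins (val t)); exact: impl_ins.
split.
  split; first by move=> x [t ->]; exists t, t.
  split; first by move=> x y _ _ [t [t' [E1 [E2 E3]]]]; exists t', t.
  split.
    move=> x y z _ _ _ [t1 [t2 [E1 [E2 E3]]]] [t3 [t4 [E4 [E5 E6]]]].
    exists t1, t4; split => //; split => //.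
    rewrite E3 -E6; apply: key; by rewrite -E2 -E4.
  split; first by move=> v [u Hu]; exists u.
  split; first by move=> v w _ _ [u [H1 H2]]; exists u.
  split.
    move=> u v w _ _ _ [a [H1 H2]] [b [H3 H4]]; exists a; split => //.
    by rewrite -(impl_uniq H3 H2).
  split.
    move=> x x' y y' _ _ _ _ [t1 [t1' [-> [-> E1]]]] [t2 [t2' [-> [-> E2]]]].
    exists (t1 ++ t2)%list, (t1' ++ t2')%list; rewrite !img_app; split => //; split => //.
    by rewrite !val_app E1 E2.
  split.
    move=> v v' w w' _ _ _ _ [a [H1 H2]] [b [H3 H4]].
    by exists (vmul a b); split; apply: impl_mul.
  split.
    move=> v v' h h' _ _ _ _ [a [H1 H2]] [t [t' [-> [-> E]]]].
    have [t1 [E1 V1]] := H1 t; have [t2 [E2 V2]] := H2 t'.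
    by exists t1, t2; rewrite E1 E2 V1 V2 E.
  move=> h h' _ _ [t [t' [-> [-> E]]]].
  exists (ins (val t)); split; first exact: impl_ins.
  rewrite E; exact: impl_ins.
split.
  split; first by move=> h; exists (rep h).
  by move=> v; exists v; apply: impl_L.
split.
  split.
    move=> h h' [t [t' [E1 [E2 E3]]]].
    rewrite -(val_rep h) -(val_rep h').
    rewrite (key E1) E3; symmetry; exact: key.
  move=> v v' [u [H1 H2]].
  by rewrite (impl_uniq (impl_L v) H1) (impl_uniq (impl_L v') H2).
split.
  split.
    move=> x [t ->]; exists (val t); exists t, (rep (val t)); split => //; split => //.
    by rewrite val_rep.
  by move=> x [u Hu]; exists u, u; split => //; apply: impl_L.
split.
  split.
    move=> h h'; exists (rep (hadd h h')), (rep h ++ rep h')%list; rewrite img_app; split => //; split => //.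
    by rewrite val_app !val_rep.
  exists (rep (hzero F)), nil; rewrite img_nil; split => //; split => //.
  by rewrite val_rep.
split.
  split.
    move=> v w; exists (vmul v w); split; first exact: impl_L.
    by apply: impl_mul; apply: impl_L.
  exists (vone F); split; [exact: impl_L|exact: impl_one].
split.
  move=> v h; exists (rep (act v h)), [:: Node v (rep h)]; rewrite img_node; split => //; split => //.
  by rewrite val_rep val_node val_rep.
move=> h; exists (ins h); split; first exact: impl_L.
have := impl_ins (rep h); by rewrite val_rep.
Qed.
End Fwd.

Unset Implicit Arguments.

Theorem mainTheorem4 (F : forest_algebra) :
  two_distributive F <->
  exists G1 G2 : forest_algebra,
    [/\ distributive G1, distributive G2 & divides F (wreath G1 G2)].
Proof.
split.
  move=> H; exists (G1 F), (G2 F); split; [exact: DA_dist|exact: DA_dist|exact: fwd_divides].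
by move=> [g1 [g2 [D1 D2 Dv]]]; exact: back D1 D2 Dv.
Qed.
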